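(* There exists a unique pointwise minimal pair of maps $t\mapsto\sigma_P(t)$, $P\in\{1,2\}$, assigning to every well-formed tree $t$ over $\tilde A_{i,k}$ a $P$-signature $\sigma_P(t)$, such that for every player $P$, all well-formed trees $t,t_L,t_R$ and all $j\in\{i,\ldots,k\}$: (1) $\sigma_P(t)=\infty$ iff $P$ does not win $\mathcal G(t)$; (2) $\sigma_P(\sim(t))=(0,\ldots,0)$ if $P$ wins $\mathcal G(\sim(t))$; (3) if $\sigma_P(t)=(\theta_{i'},\ldots,\theta_{k'})$ and $j$ is $P$-winning, then $\sigma_P(p_j(t))=(\theta_{i'},\ldots,\theta_{j-1},0,\ldots,0)$ (coordinates with index $<j$ kept, the others $0$); (4) if $\sigma_P(t)=(\theta_{i'},\ldots,\theta_{k'})$ and $j$ is $P$-losing, then $\sigma_P(p_j(t))=(\theta_{i'},\ldots,\theta_{j-2},\theta_j+1,0,\ldots,0)$; (5) $\sigma_P(c_P(t_L,t_R))=\min\{\sigma_P(t_L),\sigma_P(t_R)\}$; (6) $\sigma_P(c_{\bar P}(t_L,t_R))=\max\{\sigma_P(t_L),\sigma_P(t_R)\}$. Pointwise minimal means: for every pair $(\sigma'_1,\sigma'_2)$ satisfying (1)–(6), every $P$ and every well-formed $t$, $\sigma_P(t)\le_{lex}\sigma'_P(t)$.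
   Context: Fix natural numbers $i<k$. Trees over a ranked alphabet are partial maps $t:\omega^*\to A$ with non-empty prefix-closed domain where a node with an $m$-ary label has exactly the children $u0,\ldots,u(m-1)$; $a(t_0,\ldots,t_{m-1})$ is the tree with root label $a$ and children subtrees $t_0,\ldots$. The alphabet $\tilde A_{i,k}$ has unary letters $p_i,\ldots,p_k$, a unary letter $\sim$, and binary letters $c_1,c_2$. Players are $1,2$; $\bar P$ is the opponent of $P$. A tree $t$ is well-formed if no branch has infinitely many $\sim$. A node $u$ is switched if an odd number of strict prefixes $w\prec u$ have $t(w)=\sim$, kept otherwise. The game $\mathcal G(t)$: positions are nodes, moves to children, start at the root; $u$ is controlled by $P$ iff ($u$ kept and $t(u)=c_P$) or ($u$ switched and $t(u)=c_{\bar P}$). An infinite play (branch), which is eventually kept or eventually switched, is won by player 1 iff it is kept and the least $j$ with infinitely many nodes labelled $p_j$ is even, or it is switched and this $j$ is odd (if no priority letter occurs infinitely often take $j=k$). $P$ wins $\mathcal G(t)$ if $P$ has a winning strategy. A number $j\in\{i,\ldots,k\}$ is $P$-losing if it is odd (for $P=1$) resp. even (for $P=2$), and $P$-winning otherwise; $i',k'$ denote the least and largest $P$-losing numbers. A $P$-signature is either $\infty$ or a tuple $(\theta_{i'},\theta_{i'+2},\ldots,\theta_{k'})$ of countable ordinals indexed by the $P$-losing numbers; tuples are ordered lexicographically ($\le_{lex}$) with smaller indices more significant, and $\infty$ is the largest element. *)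

(* Defs.v *)
From mathcomp Require Import all_boot.
Set Implicit Arguments. Unset Strict Implicit. Unset Printing Implicit Defensive.

(* These properties
   characterize omega_1 up to order isomorphism. *)
Record Omega1 := {
  ord :> Type;
  olt : ord -> ord -> Prop;
  olt_irrefl : forall x, ~ olt x x;
  olt_trans : forall x y z, olt x y -> olt y z -> olt x z;
  olt_total : forall x y, olt x y \/ x = y \/ olt y x;
  olt_wf : well_founded olt;
  olt_countable_pred : forall x : ord,
      exists f : nat -> ord, forall y, olt y x -> exists n, f n = y;
  olt_uncountable : forall f : nat -> ord, exists x, forall n, f n <> x;
  ozero : ord;
  ozero_min : forall x, ~ olt x ozero;
  osucc : ord -> ord;
  osucc_gt : forall x, olt x (osucc x);
  osucc_least : forall x y, olt x y -> y = osucc x \/ olt (osucc x) y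
}.

Inductive letter := Pr of nat | Sim | C1 | C2.
Definition arity (a : letter) : nat :=
  match a with Pr _ => 1 | Sim => 1 | C1 => 2 | C2 => 2 end.

Inductive player := P1 | P2.
Definition opp (P : player) := if P is P1 then P2 else P1.
Definition cl (P : player) : letter := if P is P1 then C1 else C2.

Definition tree := seq nat -> option letter.

(* node u . n is  rcons u n *)
Definition is_tree (i k : nat) (t : tree) : Prop :=
  t [::] <> None /\
  (forall u n, t (rcons u n) <> None -> t u <> None) /\
  (forall u a, t u = Some a ->
     (forall n, t (rcons u n) <> None <-> n < arity a) /\
     (forall j, a = Pr j -> i <= j <= k)).

Definition un (a : letter) (t : tree) : tree := fun u =>
  match u with [::] => Some a | 0 :: u' => t u' | _ => None end.
Definition bin (a : letter) (tL tR : tree) : tree := fun u =>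
  match u with
  | [::] => Some a | 0 :: u' => tL u' | 1 :: u' => tR u' | _ => None end.

Definition pref (b : nat -> nat) (n : nat) : seq nat := map b (iota 0 n).
Definition is_branch (t : tree) (b : nat -> nat) : Prop :=
  forall n, t (pref b n) <> None.

Definition is_sim (o : option letter) : bool :=
  if o is Some Sim then true else false.
Definition is_c (P : player) (o : option letter) : bool :=
  match P, o with P1, Some C1 => true | P2, Some C2 => true | _, _ => false end.

Definition well_formed (i k : nat) (t : tree) : Prop :=
  is_tree i k t /\
  forall b, is_branch t b ->
    exists N, forall n, N <= n -> ~~ is_sim (t (pref b n)).

(* u switched: odd number of strict prefixes labelled ~ *)
Definition switched (t : tree) (u : seq nat) : bool :=
  odd (count (fun m => is_sim (t (take m u))) (iota 0 (size u))).

Definition controlled (t : tree) (P : player) (u : seq nat) : bool :=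
  (~~ switched t u && is_c P (t u)) || (switched t u && is_c (opp P) (t u)).

Definition inf_often (t : tree) (b : nat -> nat) (j : nat) : Prop :=
  forall N, exists2 n, N <= n & t (pref b n) = Some (Pr j).

Definition least_inf (k : nat) (t : tree) (b : nat -> nat) (j : nat) : Prop :=
  (inf_often t b j /\ forall j', j' < j -> ~ inf_often t b j') \/
  ((forall j', ~ inf_often t b j') /\ j = k).

Definition p_winning (P : player) (j : nat) : bool :=
  if P is P1 then ~~ odd j else odd j.
Definition p_losing (P : player) (j : nat) : bool := ~~ p_winning P j.

Definition branch_won (k : nat) (P : player) (t : tree) (b : nat -> nat) : Prop :=
  exists j, least_inf k t b j /\
   (((exists N, forall n, N <= n -> ~~ switched t (pref b n)) /\ p_winning P j) \/
    ((exists N, forall n, N <= n -> switched t (pref b n)) /\ p_losing P j)).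

Definition wins (k : nat) (P : player) (t : tree) : Prop :=
  exists s : seq nat -> nat,
    (forall u, controlled t P u -> s u < 2) /\
    forall b, is_branch t b ->
      (forall n, controlled t P (pref b n) -> b n = s (pref b n)) ->
      branch_won k P t b.

Definition losing_idx (i k : nat) (P : player) : seq nat :=
  [seq j <- iota i (k - i).+1 | p_losing P j].

(* None = infinity; Some th = tuple indexed by losing_idx *)
Definition sig (O : Omega1) := option (seq O).

Definition sig_shape (i k : nat) (P : player) (O : Omega1) (s : sig O) : Prop :=
  if s is Some th then size th = size (losing_idx i k P) else True.

Fixpoint lex_le (O : Omega1) (s t : seq O) : Prop :=
  match s with
  | [::] => match t with [::] => True | _ => False end
  | x :: s' => match t with
               | [::] => False
               | y :: t' => olt x y \/ (x = y /\ lex_le s' t')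
               end
  end.

Definition sig_le (O : Omega1) (a b : sig O) : Prop :=
  match a, b with
  | _, None => True
  | None, Some _ => False
  | Some s, Some t => lex_le s t
  end.

Definition sig_min (O : Omega1) (a b c : sig O) : Prop :=
  (sig_le a b /\ c = a) \/ (sig_le b a /\ c = b).
Definition sig_max (O : Omega1) (a b c : sig O) : Prop :=
  (sig_le a b /\ c = b) \/ (sig_le b a /\ c = a).

(* conditions (1)-(6) (plus: values are P-signatures) *)
Definition good (i k : nat) (O : Omega1) (sigma : player -> tree -> sig O) : Prop :=
  forall P : player,
  let L := losing_idx i k P in
  (forall t, well_formed i k t -> sig_shape i k P (sigma P t)) /\
  (forall t, well_formed i k t -> (sigma P t = None <-> ~ wins k P t)) /\
  (forall t, well_formed i k t -> wins k P (un Sim t) ->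
     sigma P (un Sim t) = Some (nseq (size L) (ozero O))) /\
  (forall t j th, well_formed i k t -> i <= j <= k -> p_winning P j ->
     sigma P t = Some th ->
     sigma P (un (Pr j) t) =
       Some [seq (if p.1 < j then p.2 else ozero O) | p <- zip L th]) /\
  (forall t j th, well_formed i k t -> i <= j <= k -> p_losing P j ->
     sigma P t = Some th ->
     sigma P (un (Pr j) t) =
       Some [seq (if p.1 < j then p.2
                  else if p.1 == j then osucc p.2 else ozero O) | p <- zip L th]) /\
  (forall tL tR, well_formed i k tL -> well_formed i k tR ->
     sig_min (sigma P tL) (sigma P tR) (sigma P (bin (cl P) tL tR))) /\
  (forall tL tR, well_formed i k tL -> well_formed i k tR ->
     sig_max (sigma P tL) (sigma P tR) (sigma P (bin (cl (opp P)) tL tR))).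

Definition pointwise_minimal (i k : nat) (O : Omega1)
    (sigma : player -> tree -> sig O) : Prop :=
  forall sigma', good i k sigma' ->
    forall P t, well_formed i k t -> sig_le (sigma P t) (sigma' P t).

(* Main.v *)
Require Import Defs.
From mathcomp Require Import all_boot.
From Stdlib Require Import Classical ClassicalEpsilon FunctionalExtensionality ProofIrrelevance.
Set Implicit Arguments. Unset Strict Implicit. Unset Printing Implicit Defensive.

Section Ord.
Variable O : Omega1.
Implicit Types x y z : O.

Lemma olt_asym x y : olt x y -> olt y x -> False.
Proof. move=> h1 h2; exact: (olt_irrefl (olt_trans h1 h2)). Qed.

Definition ole x y := olt x y \/ x = y.

Lemma ole_refl x : ole x x. Proof. by right. Qed.
Lemma ole_trans x y z : ole x y -> ole y z -> ole x z.
Proof.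
case=> [h1|->] //; case=> [h2|<-]; left => //; exact: olt_trans h1 h2.
Qed.
Lemma ole_lt_trans x y z : ole x y -> olt y z -> olt x z.
Proof. by case=> [h1|->] // h2; exact: olt_trans h1 h2. Qed.
Lemma notlt_ole x y : ~ olt y x -> ole x y.
Proof. move=> h; case: (olt_total x y) => [a|[a|a]]; by [left|right|]. Qed.
Lemma ozero_le x : ole (ozero O) x.
Proof. apply: notlt_ole; exact: ozero_min. Qed.
Lemma osucc_le x y : olt x y -> ole (osucc x) y.
Proof. move=> h; case: (osucc_least h) => [->|a]; by [right|left]. Qed.
Lemma osucc_mono x y : olt x y -> olt (osucc x) (osucc y).
Proof. move=> h; exact: (ole_lt_trans (osucc_le h) (osucc_gt y)). Qed.

Lemma least_O (Pr : O -> Prop) : (exists x, Pr x) ->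
  exists x, Pr x /\ forall y, Pr y -> ~ olt y x.
Proof.
case=> x; elim/(well_founded_ind (@olt_wf O)): x => x IH Px.
case: (classic (exists y, Pr y /\ olt y x)) => [[y [Py lt]]|N].
  exact: IH lt Py.
exists x; split=> // y Py lt; apply: N; by exists y.
Qed.

Lemma bound_O (f : nat -> O) : exists x, forall n, olt (f n) x.
Proof.
have e : forall n, {g : nat -> O | forall y, olt y (f n) -> exists m, g m = y}.
  move=> n; apply: constructive_indefinite_description; exact: olt_countable_pred.
pose g (m : nat) : O := match (unpickle m : option (nat * nat)) with
  | Some (a, b) => if a is a'.+1 then sval (e b) a' else f b
  | None => ozero O end.
case: (olt_uncountable g) => x Hx; exists x => n.
case: (olt_total (f n) x) => [//|[E|E]].
  by case: (Hx (pickle (0, n))); rewrite /g pickleK.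
case: (svalP (e n) x E) => m Em.
by case: (Hx (pickle (m.+1, n))); rewrite /g pickleK.
Qed.

Lemma lex_size (s t : seq O) : lex_le s t -> size s = size t.
Proof.
elim: s t => [|x s IH] [|y t] //= [h|[_ h]]; last by rewrite (IH _ h).
Abort.
End Ord.
Section Lex.
Variable O : Omega1.

Fixpoint pw_le (s t : seq O) : Prop :=
  match s, t with
  | [::], [::] => True
  | x :: s', y :: t' => ole x y /\ pw_le s' t'
  | _, _ => False end.

Lemma lex_refl (s : seq O) : lex_le s s.
Proof. by elim: s => //= x s IH; right. Qed.

Lemma lex_trans (s t u : seq O) : lex_le s t -> lex_le t u -> lex_le s u.
Proof.
elim: s t u => [|x s IH] [|y t] [|z u] //= [h1|[e1 h1]] [h2|[e2 h2]].
- left; exact: olt_trans h1 h2.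
- by left; rewrite -e2.
- by left; rewrite e1.
- by right; split; [rewrite e1 e2|exact: IH h1 h2].
Qed.

Lemma lex_antisym (s t : seq O) : lex_le s t -> lex_le t s -> s = t.
Proof.
elim: s t => [|x s IH] [|y t] //= [h1|[e1 h1]] [h2|[e2 h2]].
- by case: (olt_asym h1 h2).
- by subst; case: (olt_irrefl h1).
- by subst; case: (olt_irrefl h2).
- by rewrite e1 (IH _ h1 h2).
Qed.

Lemma lex_total (s t : seq O) : size s = size t -> lex_le s t \/ lex_le t s.
Proof.
elim: s t => [|x s IH] [|y t] //=; first by left.
move=> [e].
case: (olt_total x y) => [h|[h|h]]; [by left; left| |by right; left].
subst; case: (IH _ e) => h; [left|right]; by right.
Qed.

Lemma pw_lex (s t : seq O) : pw_le s t -> lex_le s t.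
Proof.
elim: s t => [|x s IH] [|y t] //= [[h|->] h2]; first by left.
by right; split => //; apply: IH.
Qed.

Lemma pw_map (A : Type) (f g : A -> O) (L : seq A) :
  (forall j, ole (f j) (g j)) -> pw_le (map f L) (map g L).
Proof. by move=> h; elim: L => //= a L ->; split. Qed.

Lemma least_lex (n : nat) (S : seq O -> Prop) :
  (exists s, size s = n /\ S s) ->
  exists s, (size s = n /\ S s) /\ forall s', size s' = n -> S s' -> lex_le s s'.
Proof.
elim: n S => [|n IH] S.
  case=> s [/size0nil -> Ss]; exists [::]; split=> // s' /size0nil -> _.
  done.
case=> s0 [h0 S0].
have [x [[s1 [e1 S1]] xl]] : exists x, (exists s, size s = n /\ S (x :: s)) /\
    forall y, (exists s, size s = n /\ S (y :: s)) -> ~ olt y x.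
  apply: least_O; case: s0 h0 S0 => // x s [e] S0; by exists x, s.
case: (IH (fun s => S (x :: s))); first by exists s1.
move=> s [[es Ss] sl]; exists (x :: s); split; first by rewrite /= es.
case=> // y s' [e'] Ss'.
case: (olt_total x y) => [h|[h|h]]; [by left| |].
  by subst; right; split=> //; apply: sl.
by case: (xl y) => //; exists s'.
Qed.
End Lex.
Section Sig.
Variable O : Omega1.

Lemma sig_le_refl (a : sig O) : sig_le a a.
Proof. case: a => //= s; exact: lex_refl. Qed.

Lemma sig_le_trans (a b c : sig O) : sig_le a b -> sig_le b c -> sig_le a c.
Proof. case: a => [s|]; case: b => [t|]; case: c => [u|] //=; exact: lex_trans. Qed.

Lemma sig_le_antisym (a b : sig O) : sig_le a b -> sig_le b a -> a = b.
Proof. case: a; case: b => //= s t h1 h2; by rewrite (lex_antisym h2 h1). Qed.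

Lemma sig_le_None (a : sig O) : sig_le None a -> a = None.
Proof. by case: a. Qed.


Definition shp n (a : sig O) := if a is Some s then size s = n else True.

Lemma sig_le_total (a b : sig O) n : shp n a -> shp n b ->
  sig_le a b \/ sig_le b a.
Proof.
case: a => [s|]; case: b => [t|] //=; try by [left|right].
move=> e1 e2; apply: lex_total; by rewrite e1 e2.
Qed.

Lemma least_sig n (S : sig O -> Prop) : (forall x, S x -> shp n x) ->
  (exists x, S x) -> exists x, S x /\ forall y, S y -> sig_le x y.
Proof.
move=> sh [x0 S0].
case: (classic (exists s, size s = n /\ S (Some s))) => [ex|nex].
  case: (least_lex ex) => s [[e Ss] sl]; exists (Some s); split=> // [[t|]] //= St.
  apply: sl => //; exact: (sh _ St).
exists None; split; last by move=> [t|] //= St; case: nex; exists t; split=> //; exact: (sh _ St).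
case: x0 S0 => // t St; case: nex; exists t; split=> //; exact: (sh _ St).
Qed.

Lemma map_zip_mono (h : nat -> O -> O) :
  (forall l, (forall x y, olt x y -> olt (h l x) (h l y)) \/
             (forall l', l <= l' -> forall x, h l' x = ozero O)) ->
  forall (Ls : seq nat) (a b : seq O), sorted ltn Ls ->
  size a = size Ls -> size b = size Ls -> lex_le a b ->
  lex_le [seq h p.1 p.2 | p <- zip Ls a] [seq h p.1 p.2 | p <- zip Ls b].
Proof.
move=> H; elim=> [|l Ls IH] [|x a] [|y b] //= so [ea] [eb] [lt|[e le]].
- case: (H l) => [st|z]; first by left; apply: st.
  right; rewrite !z //; split => //.
  have: forall l', l' \in Ls -> l <= l'.
    move=> l' il; move: so; rewrite (path_sortedE ltn_trans) => /andP[/allP al _].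
    exact: ltnW (al _ il).
  elim: Ls a b ea eb {IH so} => [|l2 Ls IH2] [|x2 a] [|y2 b] //= [ea] [eb] al.
  have hl2 : l <= l2 by apply: al; rewrite inE eqxx.
  rewrite !z //.
  right; split=> //; apply: IH2 => // l' il; apply: al; by rewrite inE il orbT.
- subst y; right; split=> //; apply: IH => //.
  by move: so => /= /path_sorted.
Qed.
End Sig.
Definition child (d : nat) (t : tree) : tree := fun u => t (d :: u).
Definition sub (t : tree) (v : seq nat) : tree := fun u => t (v ++ u).
Definition nosim (t : tree) (v : seq nat) :=
  forall m, m < size v -> ~~ is_sim (t (take m v)).

Lemma pref_size b n : size (pref b n) = n.
Proof. by rewrite /pref size_map size_iota. Qed.

Lemma pref_add b a n : pref b (a + n) = pref b a ++ pref (fun m => b (a + m)) n.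
Proof.
rewrite /pref iotaD map_cat add0n; congr (_ ++ _).
by rewrite -[in LHS](addn0 a) iotaDl -map_comp.
Qed.

Lemma pref_rcons b n : pref b n.+1 = rcons (pref b n) (b n).
Proof. by rewrite -addn1 pref_add {2}/pref /= addn0 cats1. Qed.

Lemma take_pref b m n : m <= n -> take m (pref b n) = pref b m.
Proof.
move=> h; rewrite -(subnKC h) pref_add take_cat pref_size ltnn subnn take0 cats0.
done.
Qed.

Section Shift.
Variable (k : nat) (P : player).

Lemma switched_sub t v u : nosim t v -> switched t (v ++ u) = switched (sub t v) u.
Proof.
move=> ns; rewrite /switched size_cat iotaD count_cat.
have -> : count (fun m => is_sim (t (take m (v ++ u)))) (iota 0 (size v)) = 0.
  apply/eqP; rewrite -leqn0 leqNgt -has_count; apply/hasPn => m.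
  rewrite mem_iota add0n => /andP[_ lt]; rewrite take_cat lt; exact: ns.
rewrite add0n (_ : iota (size v) (size u) = map (addn (size v)) (iota 0 (size u))); last by rewrite -iotaDl addn0.
rewrite count_map; congr (odd _).
apply: eq_count => m /=.
by rewrite /sub take_cat ltnNge leq_addr /= addKn.
Qed.

Lemma controlled_sub t v u : nosim t v ->
  controlled t P (v ++ u) = controlled (sub t v) P u.
Proof. by move=> ns; rewrite /controlled switched_sub. Qed.

Lemma ev_shift (f : nat -> Prop) a :
  (exists N, forall n, N <= n -> f n) <-> (exists N, forall n, N <= n -> f (a + n)).
Proof.
split=> [[N h]|[N h]].
  exists N => n hn; apply: h; exact: leq_trans hn (leq_addl _ _).
exists (a + N) => n hn.
have ha : a <= n by exact: leq_trans (leq_addr _ _) hn.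
rewrite -(subnKC ha); apply: h; by rewrite leq_subRL // addnC.
Qed.

Lemma io_shift (f : nat -> Prop) a :
  (forall N, exists2 n, N <= n & f n) <-> (forall N, exists2 n, N <= n & f (a + n)).
Proof.
split=> h N.
  case: (h (a + N)) => n hn fn.
  have ha : a <= n by exact: leq_trans (leq_addr _ _) hn.
  exists (n - a); first by rewrite leq_subRL // addnC.
  by rewrite subnKC.
case: (h N) => n hn fn; exists (a + n) => //; exact: leq_trans hn (leq_addl _ _).
Qed.

Lemma won_shift t v b : nosim t v -> pref b (size v) = v ->
  branch_won k P t b <-> branch_won k P (sub t v) (fun n => b (size v + n)).
Proof.
move=> ns pv.
have E n : pref b (size v + n) = v ++ pref (fun n => b (size v + n)) n.
  by rewrite pref_add pv.
have IO j : inf_often t b j <-> inf_often (sub t v) (fun n => b (size v + n)) j.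
  rewrite /inf_often (io_shift _ (size v)); split=> h N; case: (h N) => n hn e;
    exists n => //; by move: e; rewrite E.
have LI j : least_inf k t b j <-> least_inf k (sub t v) (fun n => b (size v + n)) j.
  rewrite /least_inf; split=> [[[h1 h2]|[h1 h2]]|[[h1 h2]|[h1 h2]]].
  - left; split; first by apply/IO.
    by move=> j' lt /IO; apply: h2.
  - right; split=> // j' /IO; apply: h1.
  - left; split; first by apply/IO.
    by move=> j' lt /IO; apply: h2.
  - right; split=> // j' /IO; apply: h1.
have S1 : (exists N, forall n, N <= n -> ~~ switched t (pref b n)) <->
   (exists N, forall n, N <= n -> ~~ switched (sub t v) (pref (fun n => b (size v + n)) n)).
  rewrite (ev_shift _ (size v)); split=> [[N h]|[N h]]; exists N => n hn;
    have := h n hn; by rewrite E switched_sub.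
have S2 : (exists N, forall n, N <= n -> switched t (pref b n)) <->
   (exists N, forall n, N <= n -> switched (sub t v) (pref (fun n => b (size v + n)) n)).
  rewrite (ev_shift _ (size v)); split=> [[N h]|[N h]]; exists N => n hn;
    have := h n hn; by rewrite E switched_sub.
rewrite /branch_won; split=> [[j [/LI h1 h2]]|[j [/LI h1 h2]]]; exists j; split=> //.
  by case: h2 => [[/S1 a b']|[/S2 a b']]; [left|right].
by case: h2 => [[/S1 a b']|[/S2 a b']]; [left|right].
Qed.
End Shift.
Section Strat.
Variable (k : nat) (P : player).

Definition wstrat (t : tree) (s : seq nat -> nat) :=
  (forall u, controlled t P u -> s u < 2) /\
  forall b, is_branch t b ->
    (forall n, controlled t P (pref b n) -> b n = s (pref b n)) ->
    branch_won k P t b.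

Lemma winsE t : wins k P t <-> exists s, wstrat t s.
Proof. by []. Qed.

Lemma pref_ext (b : nat -> nat) v n : n <= size v -> (forall m, m < size v -> b m = nth 0 v m) ->
  pref b n = take n v.
Proof.
move=> hn hb; rewrite -[in RHS](mkseq_nth 0 v) /mkseq -map_take take_iota (minn_idPl hn) /pref.
apply/eq_in_map => m; rewrite mem_iota add0n => /andP[_ lt]; apply: hb.
exact: leq_trans lt hn.
Qed.

Lemma wstrat_sub t s v : wstrat t s -> nosim t v ->
  (forall m, m < size v -> controlled t P (take m v) -> nth 0 v m = s (take m v)) ->
  (forall m, m <= size v -> t (take m v) <> None) ->
  wstrat (sub t v) (fun u => s (v ++ u)).
Proof.
move=> [W1 W2] ns cons def; split.
  by move=> u; rewrite -controlled_sub //; apply: W1.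
move=> b' br co.
pose b n := if n < size v then nth 0 v n else b' (n - size v).
have hb m : m < size v -> b m = nth 0 v m by rewrite /b => ->.
have pv : pref b (size v) = v by rewrite (pref_ext (leqnn _) hb) take_size.
have eb : (fun n => b (size v + n)) = b'.
  apply: functional_extensionality => n; by rewrite /b ltnNge leq_addr /= addKn.
have E n : pref b (size v + n) = v ++ pref b' n by rewrite pref_add pv eb.
have Big n : size v <= n -> exists m, n = size v + m.
  by move=> h; exists (n - size v); rewrite subnKC.
rewrite -eb -won_shift //; apply: W2.
  move=> n; case: (leqP n (size v)) => h.
    by rewrite (pref_ext h hb); apply: def.
  case: (Big n (ltnW h)) => m ->; rewrite E; exact: br.
move=> n; case: (ltnP n (size v)) => h.
  rewrite (pref_ext (ltnW h) hb) hb //; exact: cons.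
case: (Big n h) => m ->; rewrite E controlled_sub // => c.
by rewrite -(co m c) /b ltnNge leq_addr /= addKn.
Qed.

Lemma wstrat_combine t (d0 : nat) (S : nat -> seq nat -> nat) :
  ~~ is_sim (t [::]) ->
  (controlled t P [::] -> d0 < 2) ->
  (forall d, t [:: d] <> None -> (controlled t P [::] -> d = d0) -> wstrat (child d t) (S d)) ->
  wstrat t (fun u => match u with [::] => d0
                     | d :: u' => if S d u' < 2 then S d u' else 0 end).
Proof.
move=> nsr hd0 H; split.
  case=> [|d u] c; first exact: hd0 c.
  by case: ifP.
move=> b br co.
have ns : nosim t [:: b 0] by case.
have pv : pref b (size [:: b 0]) = [:: b 0] by [].
have E n : pref b (1 + n) = b 0 :: pref (fun n => b (1 + n)) n by rewrite pref_add.
have W : wstrat (child (b 0) t) (S (b 0)).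
  apply: H; first exact: (br 1).
  by move=> c; rewrite (co 0 c).
apply/(won_shift _ _ ns pv); case: W => W1 W2; apply: W2.
  move=> n; have := br (1 + n); by rewrite E.
move=> n c; have := co (1 + n); rewrite E.
have -> : controlled t P (b 0 :: pref (fun n => b (1 + n)) n) =
          controlled (child (b 0) t) P (pref (fun n => b (1 + n)) n).
  exact: (controlled_sub P (v := [:: b 0])).
by move=> /(_ c) ->; rewrite (W1 _ c).
Qed.
End Strat.
Section Trees.
Variable (i k : nat).

Lemma tree_prefix t w x : is_tree i k t -> t (w ++ x) <> None -> t w <> None.
Proof.
move=> [_ [pc _]]; elim/last_ind: x => [|x n IH]; first by rewrite cats0.
rewrite -rcons_cat => h; apply: IH; exact: pc h.
Qed.

Lemma tree_take t v m : is_tree i k t -> t v <> None -> t (take m v) <> None.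
Proof. move=> T h; apply: (tree_prefix (x := drop m v) T); by rewrite cat_take_drop. Qed.

Lemma root_switched t : switched t [::] = false. Proof. by []. Qed.

Lemma controlled_root t P : controlled t P [::] = is_c P (t [::]).
Proof. by rewrite /controlled root_switched /= orbF. Qed.

Lemma tree_root_child t a d : is_tree i k t -> t [::] = Some a ->
  (t [:: d] <> None <-> d < arity a).
Proof. move=> [_ [_ lab]] h; exact: ((lab _ _ h).1 d). Qed.

Lemma tree_un t a : is_tree i k t -> t [::] = Some a -> arity a = 1 -> t = un a (child 0 t).
Proof.
move=> T h ar; apply: functional_extensionality => -[|[|d] u] //=.
case E: (t (d.+1 :: u)) => [x|] //.
have : t [:: d.+1] <> None.
  apply: (tree_prefix (x := u) T); by rewrite E.
by rewrite (tree_root_child _ T h) ar.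
Qed.

Lemma tree_bin t a : is_tree i k t -> t [::] = Some a -> arity a = 2 ->
  t = bin a (child 0 t) (child 1 t).
Proof.
move=> T h ar; apply: functional_extensionality => -[|[|[|d]] u] //=.
case E: (t (d.+2 :: u)) => [x|] //.
have : t [:: d.+2] <> None.
  apply: (tree_prefix (x := u) T); by rewrite E.
by rewrite (tree_root_child _ T h) ar.
Qed.

Lemma is_tree_child t d : is_tree i k t -> t [:: d] <> None -> is_tree i k (child d t).
Proof.
move=> [r [pc lab]] h; split=> //; split.
  move=> u n; rewrite /child -rcons_cons; exact: pc.
move=> u a e; have [h1 h2] := lab (d :: u) a e; by split.
Qed.

Lemma wf_child t d : well_formed i k t -> t [:: d] <> None -> well_formed i k (child d t).
Proof.
move=> [T W] h; split; first exact: is_tree_child.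
move=> b' br.
pose b n := if n is n'.+1 then b' n' else d.
have E n : pref b n.+1 = d :: pref b' n.
  by rewrite -add1n pref_add.
case: (W b) => [[|n]|N hN]; first by case: T.
  by rewrite E; apply: br.
exists N => n hn; rewrite /child -E; apply: hN; exact: leq_trans hn (leqnSn _).
Qed.
End Trees.

Section Games.
Variable (k : nat) (P : player).

Lemma wins_un a c : ~~ is_sim (Some a) -> ~~ is_c P (Some a) -> wins k P c -> wins k P (un a c).
Proof.
move=> ns nc [s W]; exists (fun u => match u with [::] => 0
   | d :: u' => if s u' < 2 then s u' else 0 end).
apply: (wstrat_combine (S := fun _ => s)) => //.
move=> [|d] //= _ _.
Qed.

Lemma wins_binP tL tR : wins k P tL \/ wins k P tR -> wins k P (bin (cl P) tL tR).
Proof.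
have cr : controlled (bin (cl P) tL tR) P [::] by rewrite controlled_root; case: P.
case=> [[s W]|[s W]].
- eexists; apply: (wstrat_combine (d0 := 0) (S := fun _ => s)); first by case: P.
    by [].
  by move=> d _ /(_ cr) ->.
- eexists; apply: (wstrat_combine (d0 := 1) (S := fun _ => s)); first by case: P.
    by [].
  by move=> d _ /(_ cr) ->.
Qed.

Lemma wins_binO tL tR : wins k P tL -> wins k P tR -> wins k P (bin (cl (opp P)) tL tR).
Proof.
move=> [s1 W1] [s2 W2].
have ncr : controlled (bin (cl (opp P)) tL tR) P [::] = false by rewrite controlled_root; case: P.
eexists; apply: (wstrat_combine (d0 := 0) (S := fun d => if d is 0 then s1 else s2)).
- by case: P.
- by rewrite ncr.
move=> [|[|d]] //= h; by case: h.
Qed.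

Lemma wstrat_child i0 k0 t s d : is_tree i0 k0 t -> wstrat k P t s -> ~~ is_sim (t [::]) ->
  t [:: d] <> None -> (controlled t P [::] -> d = s [::]) ->
  wstrat k P (child d t) (fun u => s (d :: u)).
Proof.
move=> T W ns hd hc.
have := (wstrat_sub (v := [:: d]) W); apply => //.
- by case.
- by case.
- by case=> [|[]] // _; case: T.
Qed.
End Games.
Section Rank.
Variable O : Omega1.
Variable R : seq nat -> seq nat -> Prop.
Hypothesis wfR : well_founded R.

Definition rk_pred v (rec : forall w, R w v -> O) (x : O) := forall w (H : R w v), olt (rec w H) x.

Lemma rk_ex v (rec : forall w, R w v -> O) :
  exists x, rk_pred rec x /\ forall y, rk_pred rec y -> ~ olt y x.
Proof.
apply: least_O.
pose f n := match (unpickle n : option (seq nat)) with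
  | Some w => match excluded_middle_informative (R w v) with
              | left H => rec w H | right _ => ozero O end
  | None => ozero O end.
case: (bound_O f) => x hx; exists x => w H.
have := hx (pickle w); rewrite /f pickleK.
case: excluded_middle_informative => // H'; by rewrite (proof_irrelevance _ H H').
Qed.

Definition rankF v (rec : forall w, R w v -> O) : O := proj1_sig (constructive_indefinite_description _ (rk_ex rec)).

Definition rank : seq nat -> O := Fix wfR (fun _ => O) rankF.

Lemma rank_eq v : rank v = rankF (fun w (_ : R w v) => rank w).
Proof.
rewrite /rank Fix_eq //.
move=> x f g h.
have -> : f = g.
  apply: functional_extensionality_dep => y; apply: functional_extensionality_dep => p.
  exact: h.
done.
Qed.

Lemma rank_spec v : rk_pred (fun w (_ : R w v) => rank w) (rank v) /\
  forall y, rk_pred (fun w (_ : R w v) => rank w) y -> ~ olt y (rank v).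
Proof. rewrite rank_eq /rankF; by case: constructive_indefinite_description. Qed.

Lemma rank_lt v w : R w v -> olt (rank w) (rank v).
Proof. move=> H; exact: (rank_spec v).1 w H. Qed.

Lemma rank_mono c v : (forall w, R w c -> R w v) -> ole (rank c) (rank v).
Proof.
move=> h; apply: notlt_ole; apply: (rank_spec c).2 => w H; apply: rank_lt; exact: h.
Qed.
End Rank.
Lemma no_chain_wf (A : Type) (R : A -> A -> Prop) :
  (forall c : nat -> A, ~ (forall n, R (c n.+1) (c n))) -> well_founded R.
Proof.
move=> H v; apply: NNPP => nA.
have step : forall x : {v | ~ Acc R v}, {w : {v | ~ Acc R v} | R (sval w) (sval x)}.
  move=> [x nx]; apply: constructive_indefinite_description.
  have [w [Rw nw]] : exists w, R w x /\ ~ Acc R w.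
    apply: NNPP => ne; apply: nx; constructor => w Rw; apply: NNPP => nw.
    by apply: ne; exists w.
  by exists (exist _ w nw).
pose c n := sval (iter n (fun x => sval (step x)) (exist _ v nA)).
apply: (H c) => n; rewrite /c /=; exact: svalP (step _).
Qed.

Section Region.
Variable (i k : nat) (P : player) (t : tree) (s : seq nat -> nat).

Definition Reg (v : seq nat) := t v <> None /\ nosim t v /\
  (forall m, m < size v -> controlled t P (take m v) -> nth 0 v m = s (take m v)).

Definition Rj (j : nat) (w v : seq nat) := p_losing P j /\ Reg v /\ Reg w /\
  exists u, w = v ++ u /\ 0 < size u /\
   (forall m j', m < size u -> t (v ++ take m u) = Some (Pr j') -> j <= j') /\
   exists2 m, m < size u & t (v ++ take m u) = Some (Pr j).

Lemma switched_take w n : nosim t w -> n <= size w -> switched t (take n w) = false.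
Proof.
move=> ns hn; rewrite /switched size_take_min (minn_idPl hn).
suff -> : count (fun m => is_sim (t (take m (take n w)))) (iota 0 n) = 0 by [].
apply/eqP; rewrite -leqn0 leqNgt -has_count; apply/hasPn => m.
rewrite mem_iota add0n => /andP[_ lt]; rewrite take_takel ?(ltnW lt) //.
apply: ns; exact: leq_trans lt hn.
Qed.

Lemma Rj_wf j : is_tree i k t -> wstrat k P t s -> well_founded (Rj j).
Proof.
move=> T [_ W]; apply: no_chain_wf => c ch.
have pl : p_losing P j by case: (ch 0).
have stp n : exists u, c n.+1 = c n ++ u /\ 0 < size u /\
   (forall m j', m < size u -> t (c n ++ take m u) = Some (Pr j') -> j <= j') /\
   exists2 m, m < size u & t (c n ++ take m u) = Some (Pr j).
  by case: (ch n) => _ [_ [_ h]].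
have RegC n : Reg (c n) by case: (ch n) => _ [].
have pfx n m : n <= m -> exists x, c m = c n ++ x.
  elim: m => [|m IH]; first by rewrite leqn0 => /eqP ->; exists [::]; rewrite cats0.
  rewrite leq_eqVlt => /orP[/eqP <-|lt]; first by exists [::]; rewrite cats0.
  case: (IH lt) => x ex; case: (stp m) => u [eu _]; exists (x ++ u).
  by rewrite eu ex catA.
have szc n : size (c 0) + n <= size (c n).
  elim: n => [|n IH]; first by rewrite addn0.
  case: (stp n) => u [eu [su _]]; rewrite eu size_cat addnS.
  by rewrite -addn1 leq_add.
have szn n : n < size (c n.+1).
  apply: leq_trans (szc n.+1); by rewrite addnC ltnS leq_addr.
pose b n := nth 0 (c n.+1) n.
have nthc q p : p < size (c q) -> nth 0 (c q) p = b p.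
  move=> hp; rewrite /b.
  case: (pfx q (maxn q p.+1) (leq_maxl _ _)) => x1 e1.
  case: (pfx p.+1 (maxn q p.+1) (leq_maxr _ _)) => x2 e2.
  have := congr1 (nth 0 ^~ p) e1; rewrite e2 !nth_cat hp (szn p) => ->.
  done.
have takec p q : p <= size (c q) -> take p (c q) = pref b p.
  elim: p => [|p IH] hp; first by rewrite take0.
  rewrite (take_nth 0 hp) IH ?(ltnW hp) // pref_rcons nthc //.
have szn' n : n <= size (c n) by exact: leq_trans (leq_addl _ _) (szc n).
have br : is_branch t b.
  move=> n; rewrite -(takec n n (szn' n)); apply: tree_take T _.
  by case: (RegC n).
have co : forall n, controlled t P (pref b n) -> b n = s (pref b n).
  move=> n; rewrite -(takec n n.+1 (ltnW (szn n))) => h.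
  by case: (RegC n.+1) => _ [_ h2]; rewrite -h2 // nthc.
have nsw n : ~~ switched t (pref b n).
  rewrite -(takec n n (szn' n)) switched_take //; by case: (RegC n) => _ [].
have prio q n : size (c 0) <= n < size (c q) ->
    forall j', t (pref b n) = Some (Pr j') -> j <= j'.
  elim: q n => [|q IH] n /andP[h1 h2]; first by move: (leq_ltn_trans h1 h2); rewrite ltnn.
  case: (ltnP n (size (c q))) => h3; first by apply: IH; rewrite h1.
  case: (stp q) => u [eu [_ [hu _]]] j' e.
  apply: (hu (n - size (c q))).
    by rewrite ltn_subLR // -size_cat -eu.
  rewrite -(takec n q.+1 (ltnW h2)) eu take_cat ltnNge h3 /= in e; exact: e.
have prio' n j' : size (c 0) <= n -> t (pref b n) = Some (Pr j') -> j <= j'.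
  move=> h; apply: (prio n.+1 n); by rewrite h szn.
have io : inf_often t b j.
  move=> N; case: (stp N) => u [eu [_ [_ [m hm em]]]].
  exists (size (c N) + m); first by apply: leq_trans (szn' N) (leq_addr _ _).
  rewrite -(takec _ N.+1); last by rewrite eu size_cat leq_add2l ltnW.
  by rewrite eu take_cat ltnNge leq_addr /= addKn.
case: (W b br co) => j0 [LI [[_ pw]|[[N hN] _]]]; last first.
  by move: (hN N (leqnn N)); rewrite (negbTE (nsw N)).
case: LI => [[io0 lt0]|[h _]]; last by apply: (h j).
have ej : j0 = j.
  case: (ltngtP j0 j) => // h.
  - case: (io0 (size (c 0))) => n hn e; move: (prio' n j0 hn e); by rewrite leqNgt h.
  - by case: (lt0 j h).
by move: pl; rewrite /p_losing -ej pw.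
Qed.
End Region.
Lemma zip_map_self (A B : Type) (L : seq A) (f : A -> B) :
  zip L (map f L) = map (fun j => (j, f j)) L.
Proof. by elim: L => //= a L ->. Qed.

Lemma nseq_map (A B : Type) (L : seq A) (x : B) : nseq (size L) x = map (fun _ => x) L.
Proof. by elim: L => //= a L ->. Qed.

Section Main.
Variable (i k : nat) (O : Omega1) (P : player).

Definition L := losing_idx i k P.
Definition n0 := size L.
Definition shpL (a : sig O) := shp n0 a.

Lemma L_sorted : sorted ltn L.
Proof. rewrite /L /losing_idx; apply: sorted_filter; [exact: ltn_trans|exact: iota_ltn_sorted]. Qed.

Definition hW (j l : nat) (x : O) := if l < j then x else ozero O.
Definition hL (j l : nat) (x : O) := if l < j then x else if l == j then osucc x else ozero O.
Definition trW j (th : seq O) := [seq (if p.1 < j then p.2 else ozero O) | p <- zip L th].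
Definition trL j (th : seq O) :=
  [seq (if p.1 < j then p.2 else if p.1 == j then osucc p.2 else ozero O) | p <- zip L th].
Definition tr j th := if p_winning P j then trW j th else trL j th.

Lemma tr_size j th : size th = n0 -> size (tr j th) = n0.
Proof. by move=> e; rewrite /tr; case: ifP => _; rewrite size_map size_zip e minnn. Qed.

Lemma tr_mono j a b : size a = n0 -> size b = n0 -> lex_le a b -> lex_le (tr j a) (tr j b).
Proof.
move=> ea eb le; rewrite /tr; case: ifP => _.
- apply: (map_zip_mono (h := hW j)) => //; last exact: L_sorted.
  move=> l; rewrite /hW; case: (ltnP l j) => h; first by left.
  by right => l' hl x; rewrite ltnNge (leq_trans h hl).
- apply: (map_zip_mono (h := hL j)) => //; last exact: L_sorted.
  move=> l; rewrite /hL; case: (ltngtP l j) => h.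
  + by left.
  + right => l' hl x; rewrite ltnNge (ltnW (leq_trans h hl)) /=.
    by rewrite (gtn_eqF (leq_trans h hl)).
  + left => x y; subst; exact: osucc_mono.
Qed.

Definition smin (a b : sig O) := if excluded_middle_informative (sig_le a b) then a else b.
Definition smax (a b : sig O) := if excluded_middle_informative (sig_le a b) then b else a.

Lemma smin_shp a b : shpL a -> shpL b -> shpL (smin a b).
Proof. by rewrite /smin; case: excluded_middle_informative. Qed.
Lemma smax_shp a b : shpL a -> shpL b -> shpL (smax a b).
Proof. by rewrite /smax; case: excluded_middle_informative. Qed.

Lemma smin_le a b c : shpL a -> shpL b -> (sig_le a c \/ sig_le b c) -> sig_le (smin a b) c.
Proof.
move=> sa sb h; rewrite /smin; case: excluded_middle_informative => le.
  case: h => // h; exact: sig_le_trans le h.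
case: h => // h; case: (sig_le_total sa sb) => // h'; exact: sig_le_trans h' h.
Qed.

Lemma smax_le a b c : sig_le a c -> sig_le b c -> sig_le (smax a b) c.
Proof. by move=> h1 h2; rewrite /smax; case: excluded_middle_informative. Qed.

Lemma smin_mono a b a' b' : shpL a -> shpL b -> shpL a' -> shpL b' ->
  sig_le a a' -> sig_le b b' -> sig_le (smin a b) (smin a' b').
Proof.
move=> sa sb sa' sb' h1 h2; rewrite [smin a' b']/smin.
case: excluded_middle_informative => h.
  apply: smin_le => //; by left.
apply: smin_le => //; by right.
Qed.

Lemma smax_mono a b a' b' : shpL a -> shpL b -> shpL a' -> shpL b' ->
  sig_le a a' -> sig_le b b' -> sig_le (smax a b) (smax a' b').
Proof.
move=> sa sb sa' sb' h1 h2; apply: smax_le.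
  rewrite /smax; case: excluded_middle_informative => h //; exact: sig_le_trans h1 h.
rewrite /smax; case: excluded_middle_informative => h //.
apply: (sig_le_trans h2); case: (sig_le_total sa' sb') => // h'.
Qed.

Definition zeros := nseq n0 (ozero O).

Definition G (sg : tree -> sig O) (t : tree) : sig O :=
  match t [::] with
  | Some (Pr j) => match sg (child 0 t) with Some th => Some (tr j th) | None => None end
  | Some Sim => Some zeros
  | Some C1 => if P is P1 then smin (sg (child 0 t)) (sg (child 1 t))
               else smax (sg (child 0 t)) (sg (child 1 t))
  | Some C2 => if P is P2 then smin (sg (child 0 t)) (sg (child 1 t))
               else smax (sg (child 0 t)) (sg (child 1 t))
  | None => None end.

Definition F (sg : tree -> sig O) (t : tree) : sig O :=
  if excluded_middle_informative (wins k P t) then G sg t else None.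

Lemma G_shp sg t : (forall t, shpL (sg t)) -> shpL (G sg t).
Proof.
move=> sh; rewrite /G; case: (t [::]) => // -[j| | |]; try (case: P; by [apply: smin_shp|apply: smax_shp]).
- case E: (sg (child 0 t)) => [th|] //=; apply: tr_size; by have := sh (child 0 t); rewrite E.
- by rewrite /= size_nseq.
Qed.

Lemma F_shp sg t : (forall t, shpL (sg t)) -> shpL (F sg t).
Proof. move=> sh; rewrite /F; case: excluded_middle_informative => // ?; exact: G_shp. Qed.

Lemma G_mono s1 s2 t : (forall t, shpL (s1 t)) -> (forall t, shpL (s2 t)) ->
  (forall t, sig_le (s1 t) (s2 t)) -> sig_le (G s1 t) (G s2 t).
Proof.
move=> sh1 sh2 le; rewrite /G; case: (t [::]) => // -[j| | |];
  try (case: P; by [apply: smin_mono|apply: smax_mono]).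
- have := le (child 0 t); have := sh1 (child 0 t); have := sh2 (child 0 t).
  case: (s1 (child 0 t)) => [a|]; case: (s2 (child 0 t)) => [b|] //= eb ea h.
  exact: tr_mono.
- exact: sig_le_refl.
Qed.

Lemma F_mono s1 s2 t : (forall t, shpL (s1 t)) -> (forall t, shpL (s2 t)) ->
  (forall t, sig_le (s1 t) (s2 t)) -> sig_le (F s1 t) (F s2 t).
Proof. move=> *; rewrite /F; case: excluded_middle_informative => // ?; exact: G_mono. Qed.

Definition PF (sg : tree -> sig O) := forall t, shpL (sg t) /\ sig_le (F sg t) (sg t).

Definition Mset t x := exists sg, PF sg /\ sg t = x.

Definition mu (t : tree) : sig O :=
  epsilon (inhabits None) (fun x => Mset t x /\ forall y, Mset t y -> sig_le x y).

Lemma mu_spec t : Mset t (mu t) /\ forall sg, PF sg -> sig_le (mu t) (sg t).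
Proof.
have ex : exists x, Mset t x /\ forall y, Mset t y -> sig_le x y.
  apply: (@least_sig O n0).
    move=> x [sg [h <-]]; exact: (h t).1.
  exists None, (fun _ => None); split => // t0; split => //; by case: (F _ t0).
have := epsilon_spec (inhabits None) _ ex; rewrite -/(mu t) => -[h1 h2].
split=> // sg h; apply: h2; by exists sg.
Qed.

Lemma mu_shp t : shpL (mu t).
Proof. by case: (mu_spec t) => -[sg [h <-]] _; exact: (h t).1. Qed.

Lemma mu_fix t : mu t = F mu t.
Proof.
have Fle : forall t, sig_le (F mu t) (mu t).
  move=> t0; case: (mu_spec t0) => -[sg [h e]] _; rewrite -e.
  apply: (sig_le_trans (F_mono t0 mu_shp (fun t => (h t).1) (fun t => (mu_spec t).2 sg h))).
  exact: (h t0).2.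
have PFF : PF (F mu).
  move=> t0; split; first exact: F_shp mu_shp.
  apply: F_mono; [move=> ?; exact: F_shp mu_shp | exact: mu_shp | exact: Fle].
apply: sig_le_antisym; [exact: (mu_spec t).2 _ PFF|exact: Fle].
Qed.

Lemma is_c_pr Q j : is_c Q (Some (Pr j)) = false. Proof. by case: Q. Qed.

Lemma sub_child t v d : child d (sub t v) = sub t (rcons v d).
Proof. apply: functional_extensionality => u; by rewrite /child /sub cat_rcons. Qed.

Lemma take_rcons_lt (v : seq nat) d m : m <= size v -> take m (rcons v d) = take m v.
Proof.
move=> h; rewrite -cats1 take_cat; case: ltnP => // h2.
have -> : m = size v by apply/eqP; rewrite eqn_leq h h2.
by rewrite subnn take0 cats0 take_size.
Qed.

Section Reg.
Variable (t : tree) (s : seq nat -> nat).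

Lemma Reg_sw v : Reg P t s v -> switched t v = false.
Proof.
move=> [_ [ns _]]; have := switched_take (t := t) ns (leqnn (size v)); by rewrite take_size.
Qed.

Lemma Reg_ctrl v : Reg P t s v -> controlled t P v = is_c P (t v).
Proof. move=> r; by rewrite /controlled (Reg_sw r) /= orbF. Qed.

Lemma Reg_child v d : Reg P t s v -> ~~ is_sim (t v) -> (controlled t P v -> d = s v) ->
  t (rcons v d) <> None -> Reg P t s (rcons v d).
Proof.
move=> [tv [ns co]] nsv cd td; split=> //; split; rewrite ?/nosim size_rcons.
  move=> m; rewrite ltnS leq_eqVlt => /orP[/eqP ->|lt].
    by rewrite -cats1 take_cat ltnn subnn take0 cats0.
  rewrite take_rcons_lt ?(ltnW lt) //; exact: ns.
move=> m; rewrite ltnS leq_eqVlt => /orP[/eqP ->|lt].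
  rewrite -cats1 take_cat ltnn subnn take0 cats0 nth_cat ltnn subnn /=; exact: cd.
rewrite take_rcons_lt ?(ltnW lt) // nth_rcons lt; exact: co.
Qed.

Lemma Rj_step j v d w : Reg P t s v -> Reg P t s (rcons v d) ->
  (forall j', t v = Some (Pr j') -> j <= j') ->
  Rj P t s j w (rcons v d) -> Rj P t s j w v.
Proof.
move=> rv rc hp [pl [_ [rw [u [ew [su [pu [m hm em]]]]]]]].
split=> //; split=> //; split=> //; exists (d :: u); split; first by rewrite ew cat_rcons.
split=> //; split.
  move=> [|m'] j' /=; first by rewrite cats0 => _; apply: hp.
  rewrite ltnS -cat_rcons; exact: pu.
by exists m.+1 => //=; rewrite -cat_rcons.
Qed.

Lemma Rj_stepP j v d : Reg P t s v -> Reg P t s (rcons v d) ->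
  t v = Some (Pr j) -> p_losing P j -> Rj P t s j (rcons v d) v.
Proof.
move=> rv rc e pl; split=> //; split=> //; split=> //; exists [:: d].
split; first by rewrite cats1.
split=> //; split.
  by move=> [|m] j' // _ /=; rewrite cats0 e => -[->].
by exists 0 => //=; rewrite cats0.
Qed.
End Reg.

Definition theta t s (T : is_tree i k t) (Ws : wstrat k P t s) (v : seq nat) : seq O :=
  [seq rank O (Rj_wf j T Ws) v | j <- L].

Definition Wit t' x := exists t s (T : is_tree i k t) (Ws : wstrat k P t s) v,
  Reg P t s v /\ sub t v = t' /\ x = Some (theta T Ws v).

Definition Sg t' := epsilon (inhabits None) (fun x =>
  (Wit t' x /\ forall y, Wit t' y -> sig_le x y) \/ (~ (exists y, Wit t' y) /\ x = None)).

Lemma Wit_shp t' x : Wit t' x -> shpL x.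
Proof. by move=> [t [s [T [Ws [v [_ [_ ->]]]]]]]; rewrite /shpL /= size_map. Qed.

Lemma Sg_spec t' : (Wit t' (Sg t') /\ forall y, Wit t' y -> sig_le (Sg t') y) \/
  (~ (exists y, Wit t' y) /\ Sg t' = None).
Proof.
pose Q x := (Wit t' x /\ forall y, Wit t' y -> sig_le x y) \/ (~ (exists y, Wit t' y) /\ x = None).
have ex : exists x, Q x.
  case: (classic (exists y, Wit t' y)) => ex; last by exists None; right.
  case: (least_sig (@Wit_shp t') ex) => x h; exists x; by left.
exact: (epsilon_spec (inhabits None) Q ex).
Qed.

Lemma Sg_shp t' : shpL (Sg t').
Proof. by case: (Sg_spec t') => [[h _]|[_ ->]] //; exact: Wit_shp h. Qed.

Lemma Sg_le t' x : Wit t' x -> sig_le (Sg t') x.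
Proof. move=> w; case: (Sg_spec t') => [[_ h]|[h _]]; [exact: h|by case: h; exists x]. Qed.

Lemma Sg_PF : PF Sg.
Proof.
move=> t'; split; first exact: Sg_shp.
case: (Sg_spec t') => [[w _]|[_ ->]]; last by case: (F Sg t').
destruct w as (t & s & T & Ws & v & rv & et & ex); rewrite ex; subst t'.
have tv : t v <> None by case: rv.
have [ns co] : nosim t v /\ (forall m, m < size v -> controlled t P (take m v) ->
   nth 0 v m = s (take m v)) by case: rv => _ [].
have Wsub : wins k P (sub t v).
  exists (fun u => s (v ++ u)); apply: (wstrat_sub Ws ns co).
  move=> m _; exact: tree_take T tv.
rewrite /F; case: excluded_middle_informative => // ? /=.
rewrite /G !sub_child (_ : sub t v [::] = t v); last by rewrite /sub cats0.
set th := theta T Ws.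
have lab := T.2.2.
have WitC d : Reg P t s (rcons v d) -> sig_le (Sg (sub t (rcons v d))) (Some (th (rcons v d))).
  move=> r; apply: Sg_le; by exists t, s, T, Ws, (rcons v d).
have cmono d : Reg P t s (rcons v d) -> (forall j', t v <> Some (Pr j')) ->
    lex_le (th (rcons v d)) (th v).
  move=> r H; apply: pw_lex; apply: pw_map => j; apply: rank_mono => w.
  apply: (Rj_step rv r); by move=> j' e; case: (H j').
have Cc a : t v = Some a -> arity a = 2 -> (forall j', a <> Pr j') -> ~~ is_sim (Some a) ->
   (is_c P (Some a) -> sig_le (smin (Sg (sub t (rcons v 0))) (Sg (sub t (rcons v 1)))) (Some (th v))) /\
   (~~ is_c P (Some a) -> sig_le (smax (Sg (sub t (rcons v 0))) (Sg (sub t (rcons v 1)))) (Some (th v))).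
  move=> E ar npr nsm.
  have chd d : d < 2 -> (is_c P (Some a) -> d = s v) -> sig_le (Sg (sub t (rcons v d))) (Some (th v)).
    move=> hd hc.
    have r : Reg P t s (rcons v d).
      apply: (Reg_child rv); first by rewrite E.
        by rewrite (Reg_ctrl rv) E.
      by apply/((lab v _ E).1 d); rewrite ar.
    apply: sig_le_trans (WitC d r) _ => /=; apply: cmono r _ => j'; rewrite E => -[e].
    by apply: (npr j').
  split=> hc.
    have hs : s v < 2 by apply: Ws.1; rewrite (Reg_ctrl rv) E.
    apply: smin_le; try exact: Sg_shp.
    move: (chd (s v) hs (fun _ => erefl)); case: (s v) hs => [|[|]] // _ h; by [left|right].
  apply: smax_le; apply: chd => // h; by rewrite h in hc.
case E: (t v) => [a|] //; case: a E => [j0| | |] E.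
- have r0 : Reg P t s (rcons v 0).
    apply: (Reg_child rv); first by rewrite E.
      by rewrite (Reg_ctrl rv) E is_c_pr.
    by apply/((lab v _ E).1 0).
  have s0 := Sg_shp (sub t (rcons v 0)).
  move: (WitC 0 r0) s0; case: (Sg (sub t (rcons v 0))) => [th0|] //= le0 s0.
  apply: lex_trans (tr_mono j0 s0 _ le0) _; first by rewrite size_map.
  rewrite /tr /trW /trL /th /theta zip_map_self -!map_comp; case: ifP => pw;
    apply: pw_lex; apply: pw_map => j /=.
  + case: ltnP => h; last exact: ozero_le.
    apply: rank_mono => w; apply: (Rj_step rv r0); rewrite E => j' [<-]; exact: ltnW.
  + case: (ltngtP j j0) => h.
    * apply: rank_mono => w; apply: (Rj_step rv r0); rewrite E => j' [<-]; exact: ltnW.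
    * exact: ozero_le.
    * subst j; apply: osucc_le; apply: rank_lt; apply: (Rj_stepP rv r0 E).
      by rewrite /p_losing pw.
- rewrite /zeros /n0 nseq_map /=; apply: pw_lex; apply: pw_map => j; exact: ozero_le.
- have [h1 h2] := Cc C1 E erefl (fun _ => ltac:(discriminate)) erefl.
  by case: P h1 h2 => /= h1 h2; [apply: h1|apply: h2].
- have [h1 h2] := Cc C2 E erefl (fun _ => ltac:(discriminate)) erefl.
  by case: P h1 h2 => /= h1 h2; [apply: h2|apply: h1].
Qed.

Lemma Sg_fin t : is_tree i k t -> wins k P t -> Sg t <> None.
Proof.
move=> T [s Ws].
have w : Wit t (Some (theta T Ws [::])).
  exists t, s, T, Ws, [::]; split=> //; split=> //; by case: T.
by move: (Sg_le w); case: (Sg t).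
Qed.

Lemma mu_wins t : mu t <> None -> wins k P t.
Proof. rewrite mu_fix /F; by case: excluded_middle_informative. Qed.

Lemma mu_None t : ~ wins k P t -> mu t = None.
Proof. move=> n; apply: NNPP => h; exact: n (mu_wins h). Qed.

Lemma mu_good1 t : well_formed i k t -> (mu t = None <-> ~ wins k P t).
Proof.
move=> [T _]; split; last exact: mu_None.
move=> e w; have := (mu_spec t).2 _ Sg_PF; rewrite e.
by move/sig_le_None; apply: Sg_fin.
Qed.

Lemma mu_good2 t : wins k P (un Sim t) -> mu (un Sim t) = Some zeros.
Proof. move=> w; rewrite mu_fix /F; by case: excluded_middle_informative. Qed.

Lemma child_un a t : child 0 (un a t) = t. Proof. by []. Qed.

Lemma mu_good34 t j th : mu t = Some th -> mu (un (Pr j) t) = Some (tr j th).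
Proof.
move=> e; have w : wins k P t by apply: mu_wins; rewrite e.
have w' : wins k P (un (Pr j) t) by apply: wins_un => //; rewrite is_c_pr.
rewrite mu_fix /F; case: excluded_middle_informative => // ? /=.
by rewrite /G child_un e.
Qed.

Lemma G_binP sg tL tR : G sg (bin (cl P) tL tR) = smin (sg tL) (sg tR).
Proof. by rewrite /G; case: P. Qed.

Lemma G_binO sg tL tR : G sg (bin (cl (opp P)) tL tR) = smax (sg tL) (sg tR).
Proof. by rewrite /G; case: P. Qed.

Lemma smin_min a b : shpL a -> shpL b -> sig_min a b (smin a b).
Proof.
move=> sa sb; rewrite /smin; case: excluded_middle_informative => h; first by left.
right; split=> //; by case: (sig_le_total sa sb).
Qed.

Lemma smax_max a b : shpL a -> shpL b -> sig_max a b (smax a b).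
Proof.
move=> sa sb; rewrite /smax; case: excluded_middle_informative => h; first by left.
right; split=> //; by case: (sig_le_total sa sb).
Qed.

Lemma mu_good5 tL tR : sig_min (mu tL) (mu tR) (mu (bin (cl P) tL tR)).
Proof.
rewrite [mu (bin _ _ _)]mu_fix /F; case: excluded_middle_informative => w /=.
  rewrite G_binP; apply: smin_min; exact: mu_shp.
rewrite !mu_None; first by left.
- by move=> h; apply: w; apply: wins_binP; right.
- by move=> h; apply: w; apply: wins_binP; left.
Qed.

Lemma mu_good6 tL tR : sig_max (mu tL) (mu tR) (mu (bin (cl (opp P)) tL tR)).
Proof.
rewrite [mu (bin _ _ _)]mu_fix /F; case: excluded_middle_informative => w /=.
  rewrite G_binO; apply: smax_max; exact: mu_shp.
case: (classic (wins k P tL)) => hL.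
  have hR : ~ wins k P tR by move=> hR; apply: w; apply: wins_binO.
  by rewrite (mu_None hR); left; split=> //; case: (mu tL).
by rewrite (mu_None hL); right; split=> //; case: (mu tR).
Qed.

Lemma smin_of_min a b c : sig_min a b c -> sig_le (smin a b) c.
Proof.
rewrite /smin; case: excluded_middle_informative => h [[h1 ->]|[h1 ->]] //;
  exact: sig_le_refl.
Qed.

Lemma smax_of_max a b c : sig_max a b c -> sig_le (smax a b) c.
Proof.
rewrite /smax; case: excluded_middle_informative => h [[h1 ->]|[h1 ->]] //;
  exact: sig_le_refl.
Qed.
End Main.

Lemma mu_min (i k : nat) (O : Omega1) (sg : player -> tree -> sig O) :
  good i k sg -> forall P t, well_formed i k t -> sig_le (mu i k O P t) (sg P t).
Proof.
move=> Hg P; have := Hg P => /= -[sh [g1 [g2 [g3 [g4 [g5 g6]]]]]].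
pose s2 t := if excluded_middle_informative (well_formed i k t) then sg P t else None.
have E2 t : well_formed i k t -> s2 t = sg P t.
  by move=> w; rewrite /s2; case: excluded_middle_informative.
suff PF2 : PF i k P s2.
  move=> t w; rewrite -(E2 t w); exact: (mu_spec i k O P t).2 _ PF2.
move=> t; split.
  rewrite /s2; case: excluded_middle_informative => // w; exact: sh.
rewrite [s2 t]/s2; case: excluded_middle_informative => [wt|nw]; last by case: (F _ _ _ _ _).
rewrite /F; case: excluded_middle_informative => [wn|nwn]; last first.
  by rewrite (proj2 (g1 t wt) nwn).
have T := wt.1.
case Et: (t [::]) => [a|]; last by case: T.
have lab := (T.2.2 [::] a Et).
have cw d : d < arity a -> well_formed i k (child d t).
  move=> h; apply: wf_child wt _; exact/(lab.1 d).
rewrite /G Et.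
case: a Et lab cw => [j| | |] Et lab cw.
- have Eu := tree_un T Et erefl.
  have wc := cw 0 erefl.
  rewrite (E2 _ wc).
  have wc0 : wins k P (child 0 t).
    case: wn => s Ws; exists (fun u => s (0 :: u)).
    apply: (wstrat_child T Ws); [by rewrite Et|exact/(lab.1 0)|by rewrite controlled_root Et is_c_pr].
  case Ec: (sg P (child 0 t)) => [th|]; last by case: (proj1 (g1 _ wc) Ec).
  have ij := lab.2 j erefl.
  have -> : sg P t = sg P (un (Pr j) (child 0 t)) by rewrite {1}Eu.
  rewrite /tr; case: ifP => pw.
    rewrite (g3 _ j th wc ij pw Ec); exact: sig_le_refl.
  rewrite (g4 _ j th wc ij _ Ec); [exact: sig_le_refl|by rewrite /p_losing pw].
- have Eu := tree_un T Et erefl.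
  have wc := cw 0 erefl.
  have -> : sg P t = sg P (un Sim (child 0 t)) by rewrite {1}Eu.
  rewrite g2 //; first exact: sig_le_refl.
  by rewrite -Eu.
- have Eb := tree_bin T Et erefl.
  have w0 := cw 0 erefl; have w1 := cw 1 erefl.
  rewrite (E2 _ w0) (E2 _ w1).
  have -> : sg P t = sg P (bin C1 (child 0 t) (child 1 t)) by rewrite {1}Eb.
  have H5 := g5 _ _ w0 w1; have H6 := g6 _ _ w0 w1.
  destruct P; simpl in H5, H6 |- *.
  + exact: smin_of_min H5.
  + exact: smax_of_max H6.
- have Eb := tree_bin T Et erefl.
  have w0 := cw 0 erefl; have w1 := cw 1 erefl.
  rewrite (E2 _ w0) (E2 _ w1).
  have -> : sg P t = sg P (bin C2 (child 0 t) (child 1 t)) by rewrite {1}Eb.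
  have H5 := g5 _ _ w0 w1; have H6 := g6 _ _ w0 w1.
  destruct P; simpl in H5, H6 |- *.
  + exact: smax_of_max H6.
  + exact: smin_of_min H5.
Qed.

Lemma mu_good (i k : nat) (O : Omega1) : good i k (fun P => mu i k O P).
Proof.
move=> P /=; split; first by move=> t _; exact: mu_shp.
split; first by move=> t w; exact: mu_good1.
split; first by move=> t _ w; exact: mu_good2.
split.
  move=> t j th _ _ pw e; rewrite (mu_good34 j e) /tr pw; done.
split.
  move=> t j th _ _ pl e; rewrite (mu_good34 j e) /tr.
  by move: pl; rewrite /p_losing; case: (p_winning P j).
split; move=> tL tR _ _; [exact: mu_good5|exact: mu_good6].
Qed.

Theorem mainTheorem6 (i k : nat) (O : Omega1) :
  i < k ->
  exists sigma : player -> tree -> sig O,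
    (good i k sigma /\ pointwise_minimal i k sigma) /\
    forall sigma' : player -> tree -> sig O,
      good i k sigma' /\ pointwise_minimal i k sigma' ->
      forall P t, well_formed i k t -> sigma' P t = sigma P t.
Proof.
move=> _; exists (fun P => mu i k O P); split.
  split; first exact: mu_good.
  move=> sg g P t w; exact: mu_min g P t w.
move=> sg [g m] P t w; apply: sig_le_antisym.
  exact: m _ (mu_good i k O) P t w.
exact: mu_min g P t w.
Qed.
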